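(* Let $\mathbb{K}$ be a field, $R=\mathbb{K}[X_1,\ldots,X_n]$, $J\subsetneq I\subset R$ monomial ideals, and $k\in\mathbb{N}$. Let $I'$ and $J'$ be the monomial ideals obtained from $I$ and $J$ as follows: each minimal monomial generator whose degree in $X_n$ is at least $k$ is multiplied by $X_n$, and all other minimal generators are kept unchanged. Then $\operatorname{sdepth} I/J=\operatorname{sdepth} I'/J'$.
   Context: Stanley depth: with the fine multigrading, a Stanley decomposition of a finitely generated multigraded module $M$ is a finite family $(\mathbb{K}[Z_i], m_i)$ with $m_i$ homogeneous, $Z_i$ subsets of the variables, $m_i\mathbb{K}[Z_i]$ free over $\mathbb{K}[Z_i]$, and $M=\bigoplus_i m_i\mathbb{K}[Z_i]$ as multigraded $\mathbb{K}$-vector spaces; its depth is $\min_i|Z_i|$, and $\operatorname{sdepth}M$ is the maximal depth of a Stanley decomposition. *)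

(* Defs.v *)
From mathcomp Require Import all_boot.
From mathcomp Require Import boolp.
Set Implicit Arguments. Unset Strict Implicit. Unset Printing Implicit Defensive.

(* Polynomial ring K[X_1,...,X_{n+1}] with the fine Z^{n+1}-grading.
   Variables are indexed by 'I_n.+1; the last variable X_{n+1} is ord_max.
   A monomial X^a is represented by its exponent vector a. *)
Definition mon (n : nat) := {ffun 'I_n.+1 -> nat}.

Definition mdiv n (a b : mon n) : bool := [forall i, a i <= b i].

Definition mulX n (j : 'I_n.+1) (a : mon n) : mon n :=
  [ffun i => a i + (i == j)].

(* A monomial ideal is given by a finite list G of monomial generators
   (every monomial ideal is finitely generated).  X^a lies in it iff some
   generator divides X^a. *)
Definition in_mideal n (G : seq (mon n)) (a : mon n) : bool :=
  has (fun g => mdiv g a) G.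

Definition min_gen n (G : seq (mon n)) (a : mon n) : bool :=
  in_mideal G a && ~~ has (fun g => mdiv g a && (g != a)) G.

Definition shift_gens n (k : nat) (G : seq (mon n)) : seq (mon n) :=
  [seq (if k <= g ord_max then mulX ord_max g else g) | g : mon n <- G & min_gen G g].

(* Monomials of the Stanley space X^a K[Z]: X^c with X^a | X^c and c agreeing
   with a outside Z. *)
Definition in_space n (p : mon n * {set 'I_n.+1}) (c : mon n) : bool :=
  mdiv p.1 c && [forall i, (i \notin p.2) ==> (c i == p.1 i)].

(* Monomials forming a K-basis of I/J (fine graded pieces are
   one-dimensional, spanned by the residue of X^c, c in I \ J). *)
Definition in_quot n (GI GJ : seq (mon n)) (c : mon n) : bool :=
  in_mideal GI c && ~~ in_mideal GJ c.

(* A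
   homogeneous element of I/J in the fine grading is a scalar multiple of
   the residue of a monomial X^a; m_i K[Z_i] is free over K[Z_i] iff no
   X^a * u (u a monomial in Z_i) lies in J, i.e. the whole Stanley space
   consists of basis monomials of I/J (and m_i <> 0); the direct sum
   condition means that the Stanley spaces are pairwise disjoint and cover
   the monomials of I \ J. *)
Definition stanley_dec n (GI GJ : seq (mon n))
    (D : seq (mon n * {set 'I_n.+1})) : Prop :=
  [/\ (forall p, p \in D -> forall c, in_space p c -> in_quot GI GJ c),
      (forall c, in_quot GI GJ c -> exists2 p, p \in D & in_space p c) &
      (forall i j, i < size D -> j < size D -> i != j ->
         forall c, ~~ (in_space (nth ([ffun=> 0%N] : mon n, set0) D i) c
                     && in_space (nth ([ffun=> 0%N] : mon n, set0) D j) c))].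

Definition sdec_depth n (D : seq (mon n * {set 'I_n.+1})) : nat :=
  foldr (fun (p : mon n * {set 'I_n.+1}) m => minn #|p.2| m) n.+1 D.

(* Stanley depth: maximal depth of a Stanley decomposition (depths are at
   most n+1, the number of variables). *)
Definition sdepth n (GI GJ : seq (mon n)) : nat :=
  \max_(d < n.+2 | `[< exists D, stanley_dec GI GJ D /\ d <= sdec_depth D >])
     (d : nat).

(* Main.v *)
Require Import Defs.
From mathcomp Require Import all_boot.
From mathcomp Require Import boolp zify.
Set Implicit Arguments. Unset Strict Implicit. Unset Printing Implicit Defensive.

Lemma cond3_count (T : Type) (P : pred T) (D : seq T) (x0 : T) :
  (forall i j, i < size D -> j < size D -> i != j -> ~~ (P (nth x0 D i) && P (nth x0 D j)))
  <-> count P D <= 1.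
Proof.
split.
- elim: D => //= a D IH H.
  have H' : forall i j, i < size D -> j < size D -> i != j ->
     ~~ (P (nth x0 D i) && P (nth x0 D j)).
    by move=> i j hi hj hij; exact: (H i.+1 j.+1).
  case Pa: (P a) => /=; last by rewrite add0n; apply: IH.
  suff : ~~ has P D by rewrite has_count; lia.
  apply/(has_nthP x0) => -[j hj Pj].
  by have := H 0 j.+1 isT hj isT; rewrite /= Pa Pj.
- elim: D => //= a D IH Hc [|i] [|j] //=.
  + move=> _ hj _; apply/negP => /andP [Pa Pj].
    have : has P D by apply/(has_nthP x0); exists j.
    by rewrite has_count; move: Hc; rewrite Pa; lia.
  + move=> hi _ _; apply/negP => /andP [Pi Pa].
    have : has P D by apply/(has_nthP x0); exists i.
    by rewrite has_count; move: Hc; rewrite Pa; lia.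
  + move=> hi hj hij; apply: IH => //; move: Hc; lia.
Qed.

Lemma depth_leP n d (D : seq (mon n * {set 'I_n.+1})) :
  (d <= sdec_depth D) = (d <= n.+1) && all (fun p : mon n * {set 'I_n.+1} => d <= #|p.2|) D.
Proof.
elim: D => [|p D IH] /=; first by rewrite andbT.
by rewrite leq_min IH andbCA.
Qed.

Lemma transfer n (A1 A2 B1 B2 : seq (mon n)) (f : mon n -> mon n) (V : pred (mon n))
  (L : mon n * {set 'I_n.+1} -> seq (mon n * {set 'I_n.+1})) :
 (forall c, in_quot A1 A2 c = V c && in_quot B1 B2 (f c)) ->
 (forall p c, count (fun q => in_space q c) (L p) = V c && in_space p (f c)) ->
 (forall p q, q \in L p -> q.2 = p.2) ->
 sdepth B1 B2 <= sdepth A1 A2.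
Proof.
move=> HA HL HL2; rewrite /sdepth; apply/bigmax_leqP => d /asboolP [D [[H1 H2 H3] Hd]].
apply: (leq_bigmax_cond d); apply/asboolP; exists (flatten (map L D)); split; last first.
  move: Hd; rewrite !depth_leP => /andP [-> /allP Hd]; apply/allP => q /flatten_mapP [p pD qL].
  rewrite (HL2 _ _ qL); exact: Hd.
have Hcnt : forall c, count (fun q => in_space q c) (flatten (map L D)) <= V c.
  move=> c; have : count (fun p => in_space p (f c)) D <= 1.
    by apply/(cond3_count _ _ ([ffun=> 0%N] : mon n, set0)) => i j hi hj hij; apply: H3.
  have -> : count (fun q => in_space q c) (flatten (map L D))
     = count (fun p => V c && in_space p (f c)) D.
    by elim: (D) => //= p D' IH; rewrite count_cat HL IH.
  case: (V c) => //= _; elim: (D) => //.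
split.
- move=> q /flatten_mapP [p pD qL] c qc.
  have : 0 < count (fun q => in_space q c) (L p) by rewrite -has_count; apply/hasP; exists q.
  rewrite HL lt0b => /andP [Vc pfc]; rewrite HA Vc /=; exact: H1 pD _ pfc.
- move=> c; rewrite HA => /andP [Vc qc]; have [p pD pfc] := H2 _ qc.
  have : has (fun q => in_space q c) (L p) by rewrite has_count HL Vc pfc.
  move/hasP => [q qL qc']; exists q => //; apply/flatten_mapP; by exists p.
- move=> i j hi hj hij c; move: i j hi hj hij.
  apply/(cond3_count (fun q => in_space q c)); move: (Hcnt c); case: (V c) => //; lia.
Qed.

Definition upd n (m : mon n) (t : nat) : mon n :=
  [ffun i => if i == ord_max then t else m i].

Lemma updE n (m : mon n) t i : upd m t i = if i == ord_max then t else m i.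
Proof. by rewrite ffunE. Qed.

Lemma upd_id n (m : mon n) : upd m (m ord_max) = m.
Proof. by apply/ffunP => i; rewrite updE; case: eqP => // ->. Qed.

Lemma upd_upd n (m : mon n) a b : upd (upd m a) b = upd m b.
Proof. by apply/ffunP => i; rewrite !updE; case: eqP. Qed.

Lemma upd_x n (m : mon n) a : upd m a ord_max = a.
Proof. by rewrite updE eqxx. Qed.

Definition rest n (m c : mon n) (Z : {set 'I_n.+1}) : bool :=
  [forall i, (i != ord_max) ==> (m i <= c i) && ((i \in Z) || (c i == m i))].

Lemma rest_updl n (m c : mon n) Z a : rest (upd m a) c Z = rest m c Z.
Proof.
apply/forallP/forallP => H i; have := H i; rewrite updE;
  by case: eqP.
Qed.

Lemma rest_updr n (m c : mon n) Z a : rest m (upd c a) Z = rest m c Z.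
Proof.
apply/forallP/forallP => H i; have := H i; rewrite updE;
  by case: eqP.
Qed.

Lemma in_spaceE n (m c : mon n) Z :
  in_space (m, Z) c = rest m c Z &&
    ((m ord_max <= c ord_max) && ((ord_max \in Z) || (c ord_max == m ord_max))).
Proof.
rewrite /in_space /mdiv /=.
apply/andP/andP => [[/forallP H1 /forallP H2]|[/forallP H1 /andP [Ha Hb]]]; split.
- apply/forallP => i; apply/implyP => _; rewrite H1 /=.
  by have := H2 i; rewrite implybE negbK.
- by rewrite H1 /=; have := H2 ord_max; rewrite implybE negbK.
- apply/forallP => i; case: (eqVneq i ord_max) => [->//|ne].
  by have := H1 i; rewrite ne /= => /andP [].
- apply/forallP => i; rewrite implybE negbK; case: (eqVneq i ord_max) => [->//|ne].
  by have := H1 i; rewrite ne /= => /andP [].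
Qed.

Definition Phix (k t : nat) := if t < k then t else t.-1.
Definition psi (k t : nat) := if t < k then t else t.+1.
Definition Phi' (k t : nat) := if t <= k then t else t.-1.

Lemma arithA k a b (z : bool) :
  (psi k a <= b) && (z || (b == psi k a)) +
  (if ~~ z && (0 < k) && (a == k.-1) then (k <= b) && (z || (b == k)) + 0 else 0)
  = ((0 < k) || (0 < b)) && ((a <= Phix k b) && (z || (Phix k b == a))).
Proof.
rewrite /psi /Phix.
case: z => /=; repeat match goal with
 | |- context [if ?c then _ else _] => case: (boolP c) => ?
 | |- context [?a <= ?b] => case: (leqP a b) => ?
 | |- context [?a == ?b :> nat] => case: eqP => ?
 end => //=; lia.
Qed.

Lemma arithB k a b (z : bool) :
  (if ~~ z && (a == k) then 0 else (Phi' k a <= b) && (z || (b == Phi' k a)) + 0)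
  = (a <= psi k b) && (z || (psi k b == a)).
Proof.
rewrite /psi /Phi'.
case: z => /=; repeat match goal with
 | |- context [if ?c then _ else _] => case: (boolP c) => ?
 | |- context [?a <= ?b] => case: (leqP a b) => ?
 | |- context [?a == ?b :> nat] => case: eqP => ?
 end => //=; lia.
Qed.

Lemma mdiv_trans n (a b c : mon n) : mdiv a b -> mdiv b c -> mdiv a c.
Proof.
move=> /forallP H1 /forallP H2; apply/forallP => i; exact: leq_trans (H1 i) (H2 i).
Qed.

Lemma mdiv_refl n (a : mon n) : mdiv a a.
Proof. by apply/forallP. Qed.

Lemma sum_lt n (h g : mon n) : mdiv h g -> h != g -> \sum_i h i < \sum_i g i.
Proof.
move=> /forallP hg ne.
case: (pickP (fun i => h i != g i)) => [i ni|alleq]; last first.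
  have hg' : h = g by apply/ffunP => i; apply/eqP; apply/negbFE/alleq.
  by rewrite hg' eqxx in ne.
rewrite (bigD1 i) //= [X in _ < X](bigD1 i) //=.
rewrite -addSn; apply: leq_add; first by rewrite ltn_neqAle ni hg.
by apply: leq_sum => j _; exact: hg.
Qed.

Lemma not_min n (G : seq (mon n)) (g : mon n) : ~~ min_gen G g -> g \in G ->
  exists2 h : mon n, h \in G & mdiv h g && (\sum_i h i < \sum_i g i).
Proof.
rewrite /min_gen /in_mideal => nmg gG.
have hh : has (@mdiv n ^~ g) G by apply/hasP; exists g => //; exact: mdiv_refl.
move: nmg; rewrite hh /= negbK => /hasP [h hG /andP [hg hne]].
by exists h => //; rewrite hg sum_lt.
Qed.

Lemma min_gen_ex n (G : seq (mon n)) (g : mon n) : g \in G ->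
  exists2 g0 : mon n, (g0 \in G) && min_gen G g0 & mdiv g0 g.
Proof.
have : \sum_i g i <= \sum_i g i by [].
move: {2}(\sum_i g i) => s; elim: s g => [|s IH] g Hs gG.
- have [mg|nmg] := boolP (min_gen G g).
    by exists g; rewrite ?gG ?mg ?mdiv_refl.
  have [h hG /andP [_ lt]] := not_min nmg gG; move: lt Hs; lia.
- have [mg|nmg] := boolP (min_gen G g).
    by exists g; rewrite ?gG ?mg ?mdiv_refl.
  have [h hG /andP [hg lt]] := not_min nmg gG.
  have [g0 H0 g0h] := IH h (ltnSE (leq_trans lt Hs)) hG.
  by exists g0 => //; exact: mdiv_trans g0h hg.
Qed.

Definition Vk n k (c : mon n) := (0 < k) || (0 < c ord_max).
Definition PhiM n k (c : mon n) := upd c (Phix k (c ord_max)).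
Definition psiM n k (c : mon n) := upd c (psi k (c ord_max)).

Lemma A1 k a b : (if k <= a then a+1 else a) <= b -> a <= Phix k b.
Proof. rewrite /Phix; case: (leqP k a); case: (ltnP b k); lia. Qed.
Lemma A2 k a b : (if k <= a then a+1 else a) <= b -> (0<k) || (0<b).
Proof. case: (leqP k a); lia. Qed.
Lemma A3 k a b : (0<k)||(0<b) -> a <= Phix k b -> (if k <= a then a+1 else a) <= b.
Proof. rewrite /Phix; case: (leqP k a); case: (ltnP b k); lia. Qed.

Lemma sgE n k (g : mon n) i :
  (if k <= g ord_max then mulX ord_max g else g) i =
  if i == ord_max then (if k <= g ord_max then g ord_max + 1 else g ord_max) else g i.
Proof.
case: ifP => _; rewrite ?ffunE; case: eqP => [->|] //=.
by move=> _; rewrite addn0.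
Qed.

Lemma mideal_shift n k (G : seq (mon n)) c :
  in_mideal (shift_gens k G) c = Vk k c && in_mideal G (PhiM k c).
Proof.
rewrite /in_mideal /shift_gens /Vk /PhiM; apply/hasP/andP.
- move=> [h /mapP [g]]; rewrite mem_filter => /andP [mg gG] -> /forallP hdc; split.
    by have := hdc ord_max; rewrite sgE eqxx; apply: A2.
  apply/hasP; exists g => //; apply/forallP => i; have := hdc i; rewrite updE sgE.
  by case: eqP => [->|_] //; apply: A1.
- move=> [Vc /hasP [g gG gd]]; have [g0 /andP [g0G mg0] g0g] := min_gen_ex gG.
  have /forallP gd0 := mdiv_trans g0g gd.
  exists (if k <= g0 ord_max then mulX ord_max g0 else g0).
    by apply/mapP; exists g0 => //; rewrite mem_filter mg0 g0G.
  apply/forallP => i; have := gd0 i; rewrite updE sgE; case: eqP => [->|_] //.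
  exact: A3.
Qed.

Ltac arith_tac := repeat match goal with
 | |- context [if ?c then _ else _] => case: (boolP c) => ?
 | |- context [?a <= ?b] => case: (leqP a b) => ?
 | |- context [?a == ?b :> nat] => case: eqP => ?
 end => //=; lia.

Lemma Phix_psi k t : Phix k (psi k t) = t.
Proof. rewrite /Phix /psi; case: (ltnP t k) => h; [by rewrite h | by rewrite ltnNge (leqW h)]. Qed.

Lemma Vpsi k t : (0 < k) || (0 < psi k t).
Proof. rewrite /psi; case: (ltnP t k) => h; lia. Qed.

Definition LA n k (p : mon n * {set 'I_n.+1}) : seq (mon n * {set 'I_n.+1}) :=
  (upd p.1 (psi k (p.1 ord_max)), p.2) ::
  (if (ord_max \notin p.2) && (0 < k) && (p.1 ord_max == k.-1)
   then [:: (upd p.1 k, p.2)] else [::]).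

Definition LB n k (p : mon n * {set 'I_n.+1}) : seq (mon n * {set 'I_n.+1}) :=
  if (ord_max \notin p.2) && (p.1 ord_max == k) then [::]
  else [:: (upd p.1 (Phi' k (p.1 ord_max)), p.2)].

Lemma dirA n k (GI GJ : seq (mon n)) :
  sdepth GI GJ <= sdepth (shift_gens k GI) (shift_gens k GJ).
Proof.
apply: (@transfer n _ _ _ _ (@PhiM n k) (@Vk n k) (@LA n k)).
- by move=> c; rewrite /in_quot !mideal_shift; case: (Vk k c).
- move=> [m Z] c; rewrite /LA /= /PhiM.
  have -> : forall (b : bool) q, count (fun q => in_space q c) (if b then [:: q] else [::])
     = if b then in_space q c + 0 else 0 by move=> [] q.
  rewrite !in_spaceE !rest_updl rest_updr !upd_x.
  case: (rest m c Z); last by rewrite /= andbF; case: ifP.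
  rewrite /Vk /=; exact: arithA.
- move=> [m Z] q; rewrite /LA /= inE => /orP [/eqP -> //|].
  by case: ifP; rewrite ?inE // => _ /eqP ->.
Qed.

Lemma dirB n k (GI GJ : seq (mon n)) :
  sdepth (shift_gens k GI) (shift_gens k GJ) <= sdepth GI GJ.
Proof.
apply: (@transfer n _ _ _ _ (@psiM n k) predT (@LB n k)).
- move=> c; rewrite /in_quot !mideal_shift /=.
  have -> : PhiM k (psiM k c) = c.
    by rewrite /PhiM /psiM upd_x upd_upd Phix_psi upd_id.
  have -> : Vk k (psiM k c) by rewrite /Vk /psiM upd_x Vpsi.
  by [].
- move=> [m Z] c; rewrite /LB /= /psiM.
  have -> : forall (b : bool) q, count (fun q => in_space q c) (if b then [::] else [:: q])
     = if b then 0 else in_space q c + 0 by move=> [] q.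
  rewrite !in_spaceE !rest_updl rest_updr !upd_x.
  case: (rest m c Z); last by case: ifP.
  exact: arithB.
- move=> [m Z] q; rewrite /LB /=; case: ifP; rewrite ?inE // => _ /eqP -> //.
Qed.

Theorem proposition5p1 (n : nat) (GI GJ : seq (mon n)) (k : nat) :
  (forall c, in_mideal GJ c -> in_mideal GI c) ->
  (exists c, in_mideal GI c && ~~ in_mideal GJ c) ->
  sdepth GI GJ = sdepth (shift_gens k GI) (shift_gens k GJ).
Proof.
move=> _ _; apply/eqP; rewrite eqn_leq dirA dirB //.
Qed.
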